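(* Let $(X_1,x_1)$ and $(X_2,x_2)$ be pointed diffeological spaces. Then there is a natural isomorphism of vector spaces $T_{(x_1,x_2)}(X_1\times X_2)\cong T_{x_1}(X_1)\times T_{x_2}(X_2)$.
   Context: A diffeological space is a set $X$ together with, for every open subset $U$ of every $\mathbb{R}^n$, a set of functions $U\to X$ called plots, such that constant maps are plots, the composite of a plot with a smooth map between open subsets of Euclidean spaces is a plot, and a function which is locally a plot is a plot; smooth maps send plots to plots. $X_1\times X_2$ carries the product diffeology, whose plots are the maps whose components are plots. The internal tangent space $T_x(X)$ is the colimit in the category of real vector spaces of the functor on the category whose objects are plots $p:U\to X$ with $U$ a connected open neighbourhood of $0$ in some $\mathbb{R}^n$ and $p(0)=x$, and whose morphisms $p\to q$ (for $q:V\to X$) are smooth maps $f:U\to V$ with $f(0)=0$ and $q\circ f=p$, sending $p$ to $T_0(U)$ and $f$ to $f_*:T_0(U)\to T_0(V)$. Smooth pointed maps induce linear maps between internal tangent spaces. *)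

(* Defs.v *)
From HB Require Import structures.
From mathcomp Require Import all_boot all_order all_algebra.
From mathcomp Require Import all_classical all_reals.
From mathcomp Require Import topology normedtype derive.
Set Implicit Arguments. Unset Strict Implicit. Unset Printing Implicit Defensive.
Import Order.TTheory GRing.Theory Num.Theory.
Import numFieldNormedType.Exports.
Local Open Scope classical_set_scope.
Local Open Scope ring_scope.

Definition dom (R : realType) (n : nat) (U : set 'rV[R]_n) := {u : 'rV[R]_n | U u}.

Fixpoint Ck (R : realType) (m n : nat) (k : nat) (F : 'rV[R]_m -> 'rV[R]_n)
  (U : set 'rV[R]_m) {struct k} : Prop :=
  match k with
  | 0%N => forall x, U x -> {for x, continuous F}
  | k'.+1 => (forall x, U x -> differentiable F x) /\
             (forall v : 'rV[R]_m, Ck k' (fun x => 'd F x v) U)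
  end.

Definition smooth_on (R : realType) (m n : nat) (F : 'rV[R]_m -> 'rV[R]_n)
  (U : set 'rV[R]_m) : Prop := forall k, Ck k F U.

Definition plots (R : realType) (X : Type) :=
  forall (n : nat) (U : set 'rV[R]_n), (dom U -> X) -> Prop.

Definition precomp (R : realType) (X : Type) (m n : nat) (U : set 'rV[R]_n)
  (V : set 'rV[R]_m) (p : dom U -> X) (F : 'rV[R]_m -> 'rV[R]_n)
  (hF : forall v, V v -> U (F v)) : dom V -> X :=
  fun v => p (exist _ (F (sval v)) (hF _ (proj2_sig v))).

Definition is_diffeology (R : realType) (X : Type) (plot : plots R X) : Prop :=
  [/\
      (forall n (U : set 'rV[R]_n) p, plot n U p -> open U),
      (forall n (U : set 'rV[R]_n) (x : X), open U -> plot n U (fun _ => x)),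
      (forall m n (U : set 'rV[R]_n) (V : set 'rV[R]_m) (p : dom U -> X)
         (F : 'rV[R]_m -> 'rV[R]_n) (hF : forall v, V v -> U (F v)),
         open V -> plot n U p -> smooth_on F V -> plot m V (precomp p hF)) &
      (forall n (U : set 'rV[R]_n) (p : dom U -> X), open U ->
         (forall u : dom U, exists (W : set 'rV[R]_n) (hW : forall w, W w -> U (id w)),
              [/\ open W, W (sval u) & plot n W (precomp p hW)]) ->
         plot n U p)].

Definition prod_plots (R : realType) (X1 X2 : Type) (P1 : plots R X1) (P2 : plots R X2)
  : plots R (X1 * X2) :=
  fun n U p => P1 n U (fun u => (p u).1) /\ P2 n U (fun u => (p u).2).

(** Objects of the indexing category of the internal tangent space at x:
    plots p : U -> X with U a connected open neighbourhood of 0 and p(0) = x. *)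
Record pplot (R : realType) (X : Type) (plot : plots R X) (x : X) := PPlot {
  pn : nat;
  pU : set 'rV[R]_pn;
  pU_open : open pU;
  pU_conn : connected pU;
  pU0 : pU 0;
  pmap : dom pU -> X;
  pmap_plot : plot pn pU pmap;
  pmap0 : pmap (exist _ 0 pU0) = x }.

Arguments pn {R X plot x} p.
Arguments pU {R X plot x} p.
Arguments pU_open {R X plot x} p.
Arguments pU_conn {R X plot x} p.
Arguments pU0 {R X plot x} p.
Arguments pmap {R X plot x} p.
Arguments pmap_plot {R X plot x} p.
Arguments pmap0 {R X plot x} p.

(** Cocones over the functor p |-> T_0(U) = R^n, f |-> f_* = d f(0). *)
Definition tcocone (R : realType) (X : Type) (plot : plots R X) (x : X)
  (V : lmodType R) (iota : forall P : pplot plot x, 'rV[R]_(pn P) -> V) : Prop :=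
  (forall P, linear (iota P)) /\
  (forall (P Q : pplot plot x) (F : 'rV[R]_(pn P) -> 'rV[R]_(pn Q)),
     smooth_on F (pU P) ->
     (forall u, pU P u -> pU Q (F u)) ->
     F 0 = 0 ->
     (forall u (hu : pU P u) (hv : pU Q (F u)),
        pmap Q (exist _ (F u) hv) = pmap P (exist _ u hu)) ->
     forall v, iota Q ('d F 0 v) = iota P v).

(** (V, iota) is the internal tangent space T_x(X): a colimit in R-vector spaces. *)
Definition is_internal_tangent (R : realType) (X : Type) (plot : plots R X) (x : X)
  (V : lmodType R) (iota : forall P : pplot plot x, 'rV[R]_(pn P) -> V) : Prop :=
  tcocone iota /\
  forall (W : lmodType R) (kappa : forall P : pplot plot x, 'rV[R]_(pn P) -> W),
    tcocone kappa ->
    exists g : V -> W,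
      (linear g /\ forall P v, g (iota P v) = kappa P v) /\
      (forall g' : V -> W, linear g' -> (forall P v, g' (iota P v) = kappa P v) ->
         g' = g).

Definition pplot_fst (R : realType) (X1 X2 : Type) (P1 : plots R X1) (P2 : plots R X2)
  (x1 : X1) (x2 : X2) (P : pplot (prod_plots P1 P2) (x1, x2)) : pplot P1 x1 :=
  @PPlot R X1 P1 x1 (pn P) (pU P) (pU_open P) (pU_conn P) (pU0 P)
    (fun u => (pmap P u).1) (proj1 (pmap_plot P)) (f_equal fst (pmap0 P)).

Definition pplot_snd (R : realType) (X1 X2 : Type) (P1 : plots R X1) (P2 : plots R X2)
  (x1 : X1) (x2 : X2) (P : pplot (prod_plots P1 P2) (x1, x2)) : pplot P2 x2 :=
  @PPlot R X2 P2 x2 (pn P) (pU P) (pU_open P) (pU_conn P) (pU0 P)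
    (fun u => (pmap P u).2) (proj2 (pmap_plot P)) (f_equal snd (pmap0 P)).

(* Main.v *)
Require Import Defs.
From HB Require Import structures.
From mathcomp Require Import all_boot all_order all_algebra.
From mathcomp Require Import all_classical all_reals.
From mathcomp Require Import topology normedtype derive.
Import Order.TTheory GRing.Theory Num.Theory.
Local Open Scope ring_scope.

Section Analytic.
Set Implicit Arguments. Unset Strict Implicit.
Import numFieldNormedType.Exports.
Local Open Scope classical_set_scope.
Variable R : realType.

Definition mklin {a b m n} {f : 'M[R]_(a,m) -> 'M[R]_(b,n)} (hf : linear f) :
  {linear 'M[R]_(a,m) -> 'M[R]_(b,n)} :=
  HB.pack f (GRing.isLinear.Build R _ _ *:%R f hf).

Lemma Ck_cst m n (c : 'rV[R]_n) (U : set 'rV[R]_m) k :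
  Ck k (fun _ => c) U.
Proof.
elim: k c => [|k IH] c /=.
  by move=> x _; apply: cst_continuous.
split; first by move=> x _; apply: differentiable_cst.
move=> v.
have -> : (fun x => 'd (fun _ : 'rV[R]_m => c) x v) = fun _ => (0 : 'rV[R]_n).
  by apply: funext => x; rewrite diff_cst.
exact: IH.
Qed.

Lemma smooth_lin m n (f : 'rV[R]_m -> 'rV[R]_n) (hf : linear f)
  (cf : continuous f) (U : set 'rV[R]_m) : smooth_on f U.
Proof.
move=> [|k] /=; first by move=> x _; apply: cf.
split.
  by move=> x _; apply: (@linear_differentiable _ _ _ (mklin hf)).
move=> v.
have -> : (fun x => 'd f x v) = fun _ => f v.
  by apply: funext => x; rewrite (@diff_lin _ _ _ (mklin hf)).
exact: Ck_cst.
Qed.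

Lemma d_lin m n (f : 'rV[R]_m -> 'rV[R]_n) (hf : linear f)
  (cf : continuous f) x v : 'd f x v = f v.
Proof. by rewrite (@diff_lin _ _ _ (mklin hf)). Qed.

Lemma entry_cont m n m' n' (f : 'M[R]_(m, n) -> 'M[R]_(m', n')) (hf : linear f) :
  (forall w i j, exists i' j', `|f w i j| <= `|w i' j'|) -> continuous f.
Proof.
move=> hb u A /nbhs_ballP[e /= e0 eA].
apply/nbhs_ballP; exists e => //= v [_ uv]; apply: eA; split => // i j.
have [i' [j' hij]] := hb (u - v) i j.
have : f (u - v) = f u - f v by exact: (linearB (mklin hf)).
move=> E; rewrite E !mxE in hij.
apply: (le_lt_trans hij); exact: uv.
Qed.


Section Maps.
Variable n : nat.
Definition dg (u : 'rV[R]_n) : 'rV[R]_(n + n) := row_mx u u.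
Definition j1 (u : 'rV[R]_n) : 'rV[R]_(n + n) := row_mx u 0.
Definition j2 (u : 'rV[R]_n) : 'rV[R]_(n + n) := row_mx 0 u.
Definition p1 (z : 'rV[R]_(n + n)) : 'rV[R]_n := lsubmx z.
Definition p2 (z : 'rV[R]_(n + n)) : 'rV[R]_n := rsubmx z.
Definition idv (u : 'rV[R]_n) : 'rV[R]_n := u.

Lemma lin_dg : linear dg.
Proof. by move=> a u v; rewrite /dg scale_row_mx add_row_mx. Qed.
Lemma lin_j1 : linear j1.
Proof. by move=> a u v; rewrite /j1 scale_row_mx add_row_mx scaler0 addr0. Qed.
Lemma lin_j2 : linear j2.
Proof. by move=> a u v; rewrite /j2 scale_row_mx add_row_mx scaler0 addr0. Qed.
Lemma lin_p1 : linear p1.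
Proof. by move=> a u v; apply/matrixP=> i j; rewrite /p1 !mxE. Qed.
Lemma lin_p2 : linear p2.
Proof. by move=> a u v; apply/matrixP=> i j; rewrite /p2 !mxE. Qed.
Lemma lin_idv : linear idv.
Proof. by []. Qed.

Lemma cont_dg : continuous dg.
Proof.
apply: (entry_cont lin_dg) => w i j; exists i.
by case: (split_ordP j) => k ->; exists k; rewrite /dg ?row_mxEl ?row_mxEr.
Qed.
Lemma cont_j1 : continuous j1.
Proof.
apply: (entry_cont lin_j1) => w i j; exists i.
case: (split_ordP j) => k ->; exists k; rewrite /j1 ?row_mxEl ?row_mxEr //.
by rewrite mxE normr0.
Qed.
Lemma cont_j2 : continuous j2.
Proof.
apply: (entry_cont lin_j2) => w i j; exists i.
case: (split_ordP j) => k ->; exists k; rewrite /j2 ?row_mxEl ?row_mxEr //.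
by rewrite mxE normr0.
Qed.
Lemma cont_p1 : continuous p1.
Proof. exact: continuous_lsubmx. Qed.
Lemma cont_p2 : continuous p2.
Proof. exact: continuous_rsubmx. Qed.
Lemma cont_idv : continuous idv.
Proof. by move=> x. Qed.
End Maps.


Lemma ball_conn n r : connected (ball (0 : 'rV[R]_n) r).
Proof.
have E : ball (0 : 'rV[R]_n) r =
    \bigcup_(y in ball 0 r) ((fun t : R => t *: y) @` `[0, 1]).
  apply/seteqP; split.
    move=> y hy; exists y => //; exists 1; last by rewrite scale1r.
    by rewrite /= in_itv /= ler01 lexx.
  move=> _ [y hy [t ht <-]].
  move: hy; rewrite -!ball_normE /ball_ /= !sub0r !normrN normrZ.
  move: ht; rewrite /= in_itv /= => /andP[t0 t1] hy.
  apply: le_lt_trans hy; rewrite ger0_norm //.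
  by rewrite -[X in _ <= X]mul1r ler_wpM2r.
rewrite E; apply: bigcup_connected.
  exists 0 => y hy; exists 0; last by rewrite scale0r.
  by rewrite /= in_itv /= lexx ler01.
move=> y hy; apply: connected_continuous_connected.
  exact: segment_connected.
apply: continuous_subspaceT => t.
by apply: continuousZr_tmp.
Qed.

Lemma ball_row n r (u w : 'rV[R]_n) :
  ball 0 r u -> ball 0 r w -> ball (0 : 'rV[R]_(n + n)) r (row_mx u w).
Proof.
move=> [r0 hu] [_ hw]; split => // i j.
case: (split_ordP j) => k ->; rewrite ?row_mxEl ?row_mxEr.
  by have := hu i k; rewrite !mxE.
by have := hw i k; rewrite !mxE.
Qed.

Lemma ball_p1 n r (z : 'rV[R]_(n + n)) : ball 0 r z -> ball 0 r (p1 z).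
Proof.
move=> [r0 hz]; split => // i j.
by have := hz i (lshift n j); rewrite !mxE.
Qed.

Lemma ball_p2 n r (z : 'rV[R]_(n + n)) : ball 0 r z -> ball 0 r (p2 z).
Proof.
move=> [r0 hz]; split => // i j.
by have := hz i (rshift n j); rewrite !mxE.
Qed.

End Analytic.

Section Lin.
Set Implicit Arguments. Unset Strict Implicit.
Variable R : realType.
Definition glin (U V : lmodType R) (f : U -> V) (hf : linear f) : {linear U -> V} :=
  HB.pack f (GRing.isLinear.Build R U V *:%R f hf).
Lemma lin0 (U V : lmodType R) (f : U -> V) (hf : linear f) : f 0 = 0.
Proof. exact: (linear0 (glin hf)). Qed.
Lemma linD (U V : lmodType R) (f : U -> V) (hf : linear f) a b : f (a + b) = f a + f b.
Proof. exact: (linearD (glin hf)). Qed.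
Lemma linZ (U V : lmodType R) (f : U -> V) (hf : linear f) a b : f (a *: b) = a *: f b.
Proof. exact: (scalable_linear hf a b). Qed.
End Lin.

Section Diff.
Import numFieldNormedType.Exports.
Set Implicit Arguments. Unset Strict Implicit.
Local Open Scope classical_set_scope.
Variables (R : realType) (X : Type) (plot : plots R X) (D : is_diffeology plot) (x : X).

Lemma pmap_eq (P : pplot plot x) u w (hu : pU P u) (hw : pU P w) :
  u = w -> Defs.pmap P (exist _ u hu) = Defs.pmap P (exist _ w hw).
Proof. by move=> e; subst w; rewrite (Prop_irrelevance hu hw). Qed.

Lemma pmap_0 (P : pplot plot x) u (hu : pU P u) : u = 0 -> Defs.pmap P (exist _ u hu) = x.
Proof. move=> e; rewrite (pmap_eq hu (pU0 P) e); exact: pmap0. Qed.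

Definition restrict (P : pplot plot x) (B : set 'rV[R]_(pn P)) (oB : open B)
  (cB : connected B) (B0 : B 0) (hB : forall w, B w -> pU P (id w)) : pplot plot x.
refine (@PPlot R X plot x (pn P) B oB cB B0 (precomp (Defs.pmap P) hB) _ _).
- case: D => _ _ D3 _.
  exact: (D3 _ _ (pU P) B (Defs.pmap P) id hB oB (pmap_plot P)
            (smooth_lin (@lin_idv R _) (@cont_idv R _) B)).
- rewrite /precomp /=; exact: pmap_0.
Defined.

Lemma restrict_eq (V : lmodType R) iota (Hc : @tcocone R X plot x V iota)
  (P : pplot plot x) B oB cB B0 hB v :
  iota (@restrict P B oB cB B0 hB) v = iota P v.
Proof.
case: Hc => _ Hc2.
have := Hc2 (restrict oB cB B0 hB) P (@idv R _)
  (smooth_lin (@lin_idv R _) (@cont_idv R _) B) hB erefl.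
move=> /(_ _ v) e; rewrite -e; last first.
  move=> u hu hv; rewrite /= /precomp; exact: pmap_eq.
by rewrite (d_lin (@lin_idv R _) (@cont_idv R _)).
Qed.

Lemma conn0 : connected (setT : set 'rV[R]_0).
Proof.
rewrite (_ : setT = [set 0]); first exact: connected1.
by apply/seteqP; split => y // _; rewrite /= (thinmx0 y).
Qed.

Definition Q0 : pplot plot x.
refine (@PPlot R X plot x 0 setT openT conn0 I (fun _ => x) _ erefl).
case: D => _ D2 _ _; exact: (D2 0%N setT x openT).
Defined.

Lemma const_zero (V : lmodType R) iota (Hc : @tcocone R X plot x V iota)
  (P : pplot plot x) (hc : forall u, Defs.pmap P u = x) v : iota P v = 0.
Proof.
case: Hc => Hc1 Hc2.
have := Hc2 P Q0 (fun _ => 0) (fun k => Ck_cst 0 _ k) (fun _ _ => I) erefl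
   (fun u hu hv => esym (hc _)) v.
rewrite (thinmx0 ('d _ 0 v)) => <-.
exact: (lin0 (Hc1 Q0)).
Qed.

End Diff.

Unset Implicit Arguments. Set Strict Implicit.
Section Main.
Import numFieldNormedType.Exports.
Local Open Scope classical_set_scope.
Variables (R : realType) (X1 X2 : Type) (P1 : plots R X1) (P2 : plots R X2)
  (D1 : is_diffeology P1) (D2 : is_diffeology P2) (x1 : X1) (x2 : X2)
  (T1 : lmodType R) (i1 : forall P : pplot P1 x1, 'rV[R]_(pn P) -> T1)
  (H1 : is_internal_tangent i1)
  (T2 : lmodType R) (i2 : forall P : pplot P2 x2, 'rV[R]_(pn P) -> T2)
  (H2 : is_internal_tangent i2)
  (T : lmodType R)
  (i : forall P : pplot (prod_plots P1 P2) (x1, x2), 'rV[R]_(pn P) -> T)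
  (H : is_internal_tangent i).

Local Notation PP := (prod_plots P1 P2).

Lemma DPP : is_diffeology PP.
Proof.
case: D1 => a1 b1 c1 d1; case: D2 => a2 b2 c2 d2; split.
- move=> n U p [h _]; exact: a1 h.
- by move=> n U y oU; split; [exact: b1 | exact: b2].
- move=> m n U V p F hF oV [h1 h2] sF; split.
    exact: (c1 _ _ _ _ _ F hF oV h1 sF).
  exact: (c2 _ _ _ _ _ F hF oV h2 sF).
- move=> n U p oU hl; split.
    apply: d1 => // u; have [W [hW [oW Wu [h1 h2]]]] := hl u.
    by exists W, hW.
  apply: d2 => // u; have [W [hW [oW Wu [h1 h2]]]] := hl u.
  by exists W, hW.
Qed.

Definition kap (P : pplot PP (x1, x2)) (v : 'rV[R]_(pn P)) : T1 * T2 :=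
  (i1 (pplot_fst P) v, i2 (pplot_snd P) v).

Lemma kap_cocone : tcocone kap.
Proof.
case: H1 => [[l1 c1] _]; case: H2 => [[l2 c2] _]; split.
  by move=> P a u v; rewrite /kap (l1 (pplot_fst P)) (l2 (pplot_snd P)).
move=> P Q F sF hF F0 hc v; rewrite /kap; congr pair.
  apply: (c1 (pplot_fst P) (pplot_fst Q) F sF hF F0) => u hu hv /=.
  by rewrite hc.
apply: (c2 (pplot_snd P) (pplot_snd Q) F sF hF F0) => u hu hv /=.
by rewrite hc.
Qed.

Definition incl1 (Q : pplot P1 x1) : pplot PP (x1, x2).
refine (@PPlot R _ PP (x1, x2) (pn Q) (pU Q) (pU_open Q) (pU_conn Q) (pU0 Q)
  (fun u => (Defs.pmap Q u, x2)) _ _).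
- split; first exact: (pmap_plot Q).
  case: D2 => _ b2 _ _; exact: (b2 _ _ _ (pU_open Q)).
- by rewrite pmap0.
Defined.

Definition incl2 (Q : pplot P2 x2) : pplot PP (x1, x2).
refine (@PPlot R _ PP (x1, x2) (pn Q) (pU Q) (pU_open Q) (pU_conn Q) (pU0 Q)
  (fun u => (x1, Defs.pmap Q u)) _ _).
- split; last exact: (pmap_plot Q).
  case: D1 => _ b1 _ _; exact: (b1 _ _ _ (pU_open Q)).
- by rewrite pmap0.
Defined.

Lemma fst_incl1 Q : pplot_fst (incl1 Q) = Q.
Proof.
case: Q => n U o c z p pp p0; rewrite /pplot_fst /=.
by f_equal; apply: Prop_irrelevance.
Qed.

Lemma snd_incl2 Q : pplot_snd (incl2 Q) = Q.
Proof.
case: Q => n U o c z p pp p0; rewrite /pplot_snd /=.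
by f_equal; apply: Prop_irrelevance.
Qed.

Definition kap1 (Q : pplot P1 x1) (v : 'rV[R]_(pn Q)) : T := i (incl1 Q) v.
Definition kap2 (Q : pplot P2 x2) (v : 'rV[R]_(pn Q)) : T := i (incl2 Q) v.

Lemma kap1_cocone : tcocone kap1.
Proof.
case: H => [[l c] _]; split.
  by move=> P; exact: (l (incl1 P)).
move=> P Q F sF hF F0 hc v; rewrite /kap1.
apply: (c (incl1 P) (incl1 Q) F sF hF F0) => u hu hv /=.
by rewrite hc.
Qed.

Lemma kap2_cocone : tcocone kap2.
Proof.
case: H => [[l c] _]; split.
  by move=> P; exact: (l (incl2 P)).
move=> P Q F sF hF F0 hc v; rewrite /kap2.
apply: (c (incl2 P) (incl2 Q) F sF hF F0) => u hu hv /=.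
by rewrite hc.
Qed.


Lemma key (P : pplot PP (x1, x2)) (v : 'rV[R]_(pn P)) :
  i P v = i (incl1 (pplot_fst P)) v + i (incl2 (pplot_snd P)) v.
Proof.
have DP := DPP.
case: (H) => [[hl hc] _].
have hD1 := D1; have hD2 := D2.
case: hD1 => _ _ c1 _; case: hD2 => _ _ c2 _.
have : nbhs (0 : 'rV[R]_(pn P)) (pU P).
  by apply: open_nbhs_nbhs; split; [exact: pU_open | exact: pU0].
move=> /nbhs_ballP [r /= r0 Br].
set n := pn P in v Br *.
pose B := ball (0 : 'rV[R]_n) r.
have oB : open B by exact: ball_open.
have cB : connected B by exact: ball_conn.
have B0 : B 0 by exact: ballxx.
have hB : forall w, B w -> pU P (id w) := fun w h => Br w h.
pose B2 := ball (0 : 'rV[R]_(n + n)) r.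
have oB2 : open B2 by exact: ball_open.
have cB2 : connected B2 by exact: ball_conn.
have B20 : B2 0 by exact: ballxx.
have hl1 : forall z, B2 z -> pU P (p1 z) := fun z h => Br _ (ball_p1 h).
have hr1 : forall z, B2 z -> pU P (p2 z) := fun z h => Br _ (ball_p2 h).
have p10 : p1 (0 : 'rV[R]_(n + n)) = 0 by exact: (lin0 (@lin_p1 R n)).
have p20 : p2 (0 : 'rV[R]_(n + n)) = 0 by exact: (lin0 (@lin_p2 R n)).
pose q := fun z : dom B2 =>
  (precomp (fun u => (Defs.pmap P u).1) hl1 z,
   precomp (fun u => (Defs.pmap P u).2) hr1 z).
have qplot : PP q.
  split.
    exact: (c1 _ _ _ _ _ (@p1 R n) hl1 oB2 (proj1 (pmap_plot P))
              (smooth_lin (@lin_p1 R n) (@cont_p1 R n) _)).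
  exact: (c2 _ _ _ _ _ (@p2 R n) hr1 oB2 (proj2 (pmap_plot P))
              (smooth_lin (@lin_p2 R n) (@cont_p2 R n) _)).
have q0 : q (exist _ 0 B20) = (x1, x2).
  by rewrite /q /precomp /= (pmap_0 _ p10) (pmap_0 _ p20).
pose Q := @PPlot R _ PP (x1, x2) (n + n)%N B2 oB2 cB2 B20 q qplot q0.
have e0 := restrict_eq (D := DP) (oB:=oB) (cB:=cB) (B0:=B0) (hB:=hB) (conj hl hc) v.
have dg0 : @dg R n 0 = 0 by rewrite /dg row_mx0.
have e1 := hc (restrict DP oB cB B0 hB) Q (@dg R n)
  (smooth_lin (@lin_dg R n) (@cont_dg R n) _) (fun u hu => ball_row hu hu)
  dg0.
have {}e1 := e1 _ v.
rewrite -e0 -e1; last first.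
  move=> u hu hv; rewrite /= /q /precomp /=.
  have E1 : p1 (dg u) = u by rewrite /p1 /dg row_mxKl.
  have E2 : p2 (dg u) = u by rewrite /p2 /dg row_mxKr.
  rewrite (pmap_eq _ (hB u hu) E1) (pmap_eq _ (hB u hu) E2).
  by case: (Defs.pmap P _).
rewrite (d_lin (@lin_dg R n) (@cont_dg R n)).
have -> : dg v = j1 v + j2 v by rewrite /dg /j1 /j2 add_row_mx addr0 add0r.
rewrite (linD (hl Q)).
have j10 : @j1 R n 0 = 0 by rewrite /j1 row_mx0.
have j20 : @j2 R n 0 = 0 by rewrite /j2 row_mx0.
have ball00 : B 0 by exact: B0.
congr (_ + _).
  have f1 := restrict_eq (D := DP) (P := incl1 (pplot_fst P)) (B := B)
     (oB:=oB) (cB:=cB) (B0:=B0) (hB:=hB) (conj hl hc) v.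
  rewrite -f1.
  have e2 := hc (restrict DP (P := incl1 (pplot_fst P)) oB cB B0 hB) Q (@j1 R n)
    (smooth_lin (@lin_j1 R n) (@cont_j1 R n) _) (fun u hu => ball_row hu ball00) j10.
  rewrite -(e2 _ v); last first.
    move=> u hu hv; rewrite /= /q /precomp /=.
    have E1 : p1 (j1 u) = u by rewrite /p1 /j1 row_mxKl.
    have E2 : p2 (j1 u) = 0 by rewrite /p2 /j1 row_mxKr.
    by rewrite (pmap_eq _ (hB u hu) E1) (pmap_0 (P:=P) _ E2).
  by rewrite (d_lin (@lin_j1 R n) (@cont_j1 R n)).
have f2 := restrict_eq (D := DP) (P := incl2 (pplot_snd P)) (B := B)
   (oB:=oB) (cB:=cB) (B0:=B0) (hB:=hB) (conj hl hc) v.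
rewrite -f2.
have e2 := hc (restrict DP (P := incl2 (pplot_snd P)) oB cB B0 hB) Q (@j2 R n)
  (smooth_lin (@lin_j2 R n) (@cont_j2 R n) _) (fun u hu => ball_row ball00 hu) j20.
rewrite -(e2 _ v); last first.
  move=> u hu hv; rewrite /= /q /precomp /=.
  have E1 : p1 (j2 u) = 0 by rewrite /p1 /j2 row_mxKl.
  have E2 : p2 (j2 u) = u by rewrite /p2 /j2 row_mxKr.
  by rewrite (pmap_eq _ (hB u hu) E2) (pmap_0 (P:=P) _ E1).
by rewrite (d_lin (@lin_j2 R n) (@cont_j2 R n)).
Qed.



Lemma fst_incl1_eq (Q : pplot P1 x1) (v : 'rV[R]_(pn Q)) :
  i1 (pplot_fst (incl1 Q)) v = i1 Q v.
Proof.
case: (H1) => [[l c] _].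
have := c (pplot_fst (incl1 Q)) Q (@idv R _)
  (smooth_lin (@lin_idv R _) (@cont_idv R _) _) (fun u hu => hu) erefl.
move=> /(_ _ v) <-; last first.
  by move=> u hu hv /=; apply: pmap_eq.
by rewrite (d_lin (@lin_idv R _) (@cont_idv R _)).
Qed.

Lemma snd_incl2_eq (Q : pplot P2 x2) (v : 'rV[R]_(pn Q)) :
  i2 (pplot_snd (incl2 Q)) v = i2 Q v.
Proof.
case: (H2) => [[l c] _].
have := c (pplot_snd (incl2 Q)) Q (@idv R _)
  (smooth_lin (@lin_idv R _) (@cont_idv R _) _) (fun u hu => hu) erefl.
move=> /(_ _ v) <-; last first.
  by move=> u hu hv /=; apply: pmap_eq.
by rewrite (d_lin (@lin_idv R _) (@cont_idv R _)).
Qed.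

Lemma snd_incl1_eq (Q : pplot P1 x1) (v : 'rV[R]_(pn Q)) :
  i2 (pplot_snd (incl1 Q)) v = 0.
Proof. by case: (H2) => Hc _; apply: (const_zero D2 Hc). Qed.

Lemma fst_incl2_eq (Q : pplot P2 x2) (v : 'rV[R]_(pn Q)) :
  i1 (pplot_fst (incl2 Q)) v = 0.
Proof. by case: (H1) => Hc _; apply: (const_zero D1 Hc). Qed.

Lemma main :
  exists g : T -> (T1 * T2)%type,
    [/\ linear g, bijective g &
        forall (P : pplot (prod_plots P1 P2) (x1, x2)) (v : 'rV[R]_(pn P)),
          g (i P v) = (i1 (pplot_fst P) v, i2 (pplot_snd P) v)].
Proof.
case: (H) => Hc Hu.
have [g [[lg ag] _]] := Hu _ kap kap_cocone.
case: (H1) => Hc1 Hu1; case: (H2) => Hc2 Hu2.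
have [h1 [[lh1 ah1] _]] := Hu1 _ kap1 kap1_cocone.
have [h2 [[lh2 ah2] _]] := Hu2 _ kap2 kap2_cocone.
exists g; split => //.
exists (fun ab => h1 ab.1 + h2 ab.2).
- move=> t.
  have [g0 [_ uni]] := Hu T i Hc.
  have E : (fun t => h1 (g t).1 + h2 (g t).2) = id.
    rewrite (uni id) //; apply: uni.
    + move=> a u v /=; rewrite lg.
      have -> : (a *: g u + g v).1 = a *: (g u).1 + (g v).1 by [].
      have -> : (a *: g u + g v).2 = a *: (g u).2 + (g v).2 by [].
      rewrite (linD lh1) (linD lh2) (linZ lh1) (linZ lh2).
      by rewrite scalerDr addrACA.
    + move=> P v /=; rewrite ag /kap /= ah1 ah2 /kap1 /kap2 (key P v).
      reflexivity.
  exact: (congr1 (fun f => f t) E).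
- have G1 : forall a, g (h1 a) = (a, 0).
    pose kk (P : pplot P1 x1) (v : 'rV[R]_(pn P)) : T1 * T2 := (i1 P v, 0).
    have kkc : tcocone kk.
      case: Hc1 => l c; split.
        move=> P a u v; rewrite /kk (l P).
        rewrite (_ : a *: (i1 P u, 0 : T2) + (i1 P v, 0) =
                     (a *: i1 P u + i1 P v, a *: 0 + 0)) //.
        by rewrite scaler0 addr0.
      by move=> P Q F sF hF F0 hc v; rewrite /kk (c P Q F sF hF F0 hc v).
    have [g1 [_ uni1]] := Hu1 _ kk kkc.
    have La : linear (fun a : T1 => g (h1 a)).
      by move=> a u v; rewrite lh1 lg.
    have Aa : forall P v, g (h1 (i1 P v)) = kk P v.
      move=> P v; rewrite ah1 /kap1 ag /kap.
      by rewrite fst_incl1_eq snd_incl1_eq.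
    have Lb : linear (fun a : T1 => (a, 0 : T2)).
      move=> a u v.
      rewrite (_ : a *: (u, 0 : T2) + (v, 0) = (a *: u + v, a *: 0 + 0)) //.
      by rewrite scaler0 addr0.
    have Ab : forall P v, (i1 P v, 0 : T2) = kk P v by [].
    have E : (fun a => g (h1 a)) = (fun a => (a, 0 : T2)).
      by rewrite (uni1 _ La Aa) (uni1 _ Lb Ab).
    move=> a; exact: (congr1 (fun f => f a) E).
  have G2 : forall b, g (h2 b) = (0, b).
    pose kk (P : pplot P2 x2) (v : 'rV[R]_(pn P)) : T1 * T2 := (0, i2 P v).
    have kkc : tcocone kk.
      case: Hc2 => l c; split.
        move=> P a u v; rewrite /kk (l P).
        rewrite (_ : a *: (0 : T1, i2 P u) + (0, i2 P v) =
                     (a *: 0 + 0, a *: i2 P u + i2 P v)) //.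
        by rewrite scaler0 addr0.
      by move=> P Q F sF hF F0 hc v; rewrite /kk (c P Q F sF hF F0 hc v).
    have [g1 [_ uni1]] := Hu2 _ kk kkc.
    have La : linear (fun a : T2 => g (h2 a)).
      by move=> a u v; rewrite lh2 lg.
    have Aa : forall P v, g (h2 (i2 P v)) = kk P v.
      move=> P v; rewrite ah2 /kap2 ag /kap.
      by rewrite fst_incl2_eq snd_incl2_eq.
    have Lb : linear (fun a : T2 => (0 : T1, a)).
      move=> a u v.
      rewrite (_ : a *: (0 : T1, u) + (0, v) = (a *: 0 + 0, a *: u + v)) //.
      by rewrite scaler0 addr0.
    have Ab : forall P v, (0 : T1, i2 P v) = kk P v by [].
    have E : (fun a => g (h2 a)) = (fun a => (0 : T1, a)).
      by rewrite (uni1 _ La Aa) (uni1 _ Lb Ab).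
    move=> a; exact: (congr1 (fun f => f a) E).
  move=> [a b] /=; rewrite (linD lg) G1 G2.
  rewrite (_ : (a, 0 : T2) + (0, b) = (a + 0, 0 + b)) //.
  by rewrite addr0 add0r.
Qed.


End Main.

Theorem proposition3p7 (R : realType) (X1 X2 : Type)
  (P1 : plots R X1) (P2 : plots R X2)
  (D1 : is_diffeology P1) (D2 : is_diffeology P2) (x1 : X1) (x2 : X2)
  (T1 : lmodType R) (i1 : forall P : pplot P1 x1, 'rV[R]_(pn P) -> T1)
  (H1 : is_internal_tangent i1)
  (T2 : lmodType R) (i2 : forall P : pplot P2 x2, 'rV[R]_(pn P) -> T2)
  (H2 : is_internal_tangent i2)
  (T : lmodType R)
  (i : forall P : pplot (prod_plots P1 P2) (x1, x2), 'rV[R]_(pn P) -> T)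
  (H : is_internal_tangent i) :
  exists g : T -> (T1 * T2)%type,
    [/\ linear g, bijective g &
        forall (P : pplot (prod_plots P1 P2) (x1, x2)) (v : 'rV[R]_(pn P)),
          g (i P v) = (i1 (pplot_fst P) v, i2 (pplot_snd P) v)].
Proof. exact: (@main R X1 X2 P1 P2 D1 D2 x1 x2 T1 i1 H1 T2 i2 H2 T i H). Qed.
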